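(* Suppose a closed $n$-braid $\beta$ can be represented by a braid word containing a factor $\sigma_i^{-1}$ but no factor $\sigma_i$, for some $i\in\{1,\dots,n-1\}$. Then $\kappa(\beta)=2$.
   Context: Work over $\mathbb{Z}/2$ with the Khovanov chain complex $\mathrm{CKh}$ of a link diagram (cube of resolutions, circles labeled $v_\pm$, Khovanov's merge/split differential). For $\beta\in B_n$ with closure $\bar\beta$ drawn around the braid axis, a circle in a resolution is nontrivial if it winds an odd number of times around the axis, trivial otherwise. The $k$-grading of a canonical generator is (number of nontrivial circles labeled $v_+$) minus (number of nontrivial circles labeled $v_-$); the differential does not increase $k$, so $\mathcal{F}_i=\mathrm{span}\{x:k(x)\le i\}$ are subcomplexes. The braidlike resolution ($0$-resolve positive, $1$-resolve negative crossings) has $n$ nontrivial circles; $\psi(\bar\beta)$ labels all of them $v_-$. Define $\kappa(\beta)=n+\min\{i:\psi(\bar\beta)=dy,\ y\in\mathcal{F}_i\}$ if $\psi(\bar\beta)$ is a boundary, $\kappa(\beta)=\infty$ otherwise. *)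

(* Defs.v *)
From HB Require Import structures.
From mathcomp Require Import all_boot all_order all_algebra.
Set Implicit Arguments.
Unset Strict Implicit.
Unset Printing Implicit Defensive.
Import Order.TTheory GRing.Theory Num.Theory.
Local Open Scope ring_scope.

(* A braid word on n strands: a letter (j, true) is sigma_(j+1),
   a letter (j, false) is sigma_(j+1)^(-1); it acts on strands j, j+1
   (0-indexed), j : 'I_n.-1. *)
Section Khovanov.
Variables (n : nat) (w : seq ('I_n.-1 * bool)).

(* Points of the closed braid diagram: (level, strand position).
   Level t (0 <= t <= size w) lies between crossing t-1 and crossing t;
   the closure joins level (size w) to level 0. *)
Definition vert := ('I_(size w).+1 * 'I_n)%type.

(* A resolution: false = 0-resolution, true = 1-resolution. *)
Definition res := {ffun 'I_(size w) -> bool}.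

Definition letter (t : 'I_(size w)) : 'I_n.-1 * bool := tnth (in_tuple w) t.

(* The resolution at crossing t is the oriented (braidlike) smoothing:
   0-resolution of a positive, 1-resolution of a negative crossing. *)
Definition oriented (s : res) (t : 'I_(size w)) : bool := s t == ~~ (letter t).2.

Definition edge (s : res) (x y : vert) : bool :=
  [&& (x.1 : nat) == size w, (y.1 : nat) == 0%N & x.2 == y.2]
  || [exists t : 'I_(size w),
       let j : nat := (letter t).1 in
       [&& (x.1 : nat) == t, (y.1 : nat) == t.+1, x.2 == y.2
         & (((x.2 : nat) != j) && ((x.2 : nat) != j.+1)) || oriented s t]
       || [&& ~~ oriented s t, x.1 == y.1,
              ((x.1 : nat) == t) || ((x.1 : nat) == t.+1),
              (x.2 : nat) == j & (y.2 : nat) == j.+1]].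

Definition sedge (s : res) : rel vert := fun x y => edge s x y || edge s y x.

Definition circle (s : res) (x : vert) : {set vert} := [set y | connect (sedge s) x y].
Definition circles (s : res) : {set {set vert}} := [set circle s x | x : vert].

(* A circle is nontrivial iff it winds an odd number of times around the
   braid axis, i.e. it meets the cut at level 0 an odd number of times. *)
Definition nontrivial (C : {set vert}) : bool :=
  odd #|[set p : 'I_n | (ord0, p) \in C]|.

(* Enhanced states: resolution + labelling (true = v_+, false = v_-)
   constant on circles. *)
Definition valid (g : res * {ffun vert -> bool}) : bool :=
  [forall x, forall y, connect (sedge g.1) x y ==> (g.2 x == g.2 y)].

Definition Gen := {g : res * {ffun vert -> bool} | valid g}.

Definition lab (L : {ffun vert -> bool}) (C : {set vert}) : bool := [exists x in C, L x].
Definition sgn (L : {ffun vert -> bool}) (C : {set vert}) : int := if lab L C then 1 else -1.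

Definition kgr (g : Gen) : int :=
  \sum_(C in circles (val g).1 | nontrivial C) sgn (val g).2 C.

(* Coefficient of g' in d g (Khovanov's merge/split maps over Z/2):
   s' is obtained from s by changing one 0 to 1, the labels agree on the
   circles not touching that crossing, and on the touched circles
   (#v_+ - #v_-) decreases by exactly one. *)
Definition coef (g g' : Gen) : bool :=
  let s := (val g).1 in let L := (val g).2 in
  let s' := (val g').1 in let L' := (val g').2 in
  [&& [exists t, ~~ s t && [forall u, s' u == (u == t) || s u]],
      [forall C in circles s :&: circles s', lab L C == lab L' C]
    & \sum_(C in circles s' :\: circles s) sgn L' C
        == \sum_(C in circles s :\: circles s') sgn L C - 1].

Definition chain := {ffun Gen -> 'F_2}.

Definition dKh (f : chain) : chain :=
  [ffun g' => \sum_(g : Gen) f g * (if coef g g' then 1 else 0)].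

Definition filt (i : int) (y : chain) : bool :=
  [forall g, (y g != 0) ==> (kgr g <= i)].

Definition braidlike : res := [ffun t => ~~ (letter t).2].

Definition psi : chain :=
  [ffun g => if val g == (braidlike, [ffun _ => false]) then 1 else 0].

(* kappa_is m  <->  kappa(beta) = m  (None = infinity):
   kappa = n + min { i | psi = d y, y in F_i }. *)
Definition kappa_is (m : option int) : Prop :=
  match m with
  | Some v => (exists y, filt (v - n%:Z) y /\ dKh y = psi)
              /\ forall (i : int) y, filt i y -> dKh y = psi -> v - n%:Z <= i
  | None => forall y, dKh y <> psi
  end.

End Khovanov.

(* Main.v *)
Require Import Defs.
From mathcomp Require Import all_boot all_order all_algebra.
From mathcomp Require Import zify.
Set Implicit Arguments.
Unset Strict Implicit.
Unset Printing Implicit Defensive.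

Definition fc (c q : nat) := if q == c.+1 then c else q.

Lemma fc_eq c a b : (fc c a == fc c b) =
  (a == b) || (((a == c) || (a == c.+1)) && ((b == c) || (b == c.+1))).
Proof.
rewrite /fc; case: (a =P c.+1) => [->|Ha]; case: (b =P c.+1) => [->|Hb];
repeat (case: eqP => ? /=); lia.
Qed.

Section Basic.
Variables (n : nat) (w : seq ('I_n.-1 * bool)).

Lemma ltn_posA (k : 'I_n.-1) : (k : nat) < n.
Proof. by case: n k => [[]|m] k //=; apply: ltnW; apply: ltn_ord. Qed.
Lemma ltn_posB (k : 'I_n.-1) : k.+1 < n.
Proof. by case: n k => [[]|m] k //=; apply: ltn_ord. Qed.
Definition posA (k : 'I_n.-1) : 'I_n := Ordinal (ltn_posA k).
Definition posB (k : 'I_n.-1) : 'I_n := Ordinal (ltn_posB k).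

Lemma edge_inv (s : res w) (x y : vert w) : edge s x y ->
  (x.2 == y.2) || [exists t, ~~ oriented s t && ((x.2 : nat) == (letter t).1)
                                 && ((y.2 : nat) == (letter t).1.+1)].
Proof.
rewrite /edge => /orP[/and3P[_ _ ->]//|/existsP[t /orP[/and4P[_ _ -> _]//|/and5P[H _ _ H1 H2]]]].
by apply/orP; right; apply/existsP; exists t; rewrite H H1 H2.
Qed.

Lemma sedge_f (s : res w) (u : 'I_(size w)) x y :
  (forall t, t != u -> oriented s t) -> sedge s x y ->
  fc (letter u).1 x.2 = fc (letter u).1 y.2.
Proof.
move=> Ho /orP[] /edge_inv /orP[/eqP->//|/existsP[t /andP[/andP[Ht H1] H2]]];
  have Htu: t = u by (apply/eqP; apply: contraNT Ht => /Ho).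
all: subst t; rewrite /fc (eqP H1) (eqP H2) eqxx; case: eqP => //; lia.
Qed.

Lemma sedge_B x y : sedge (braidlike w) x y -> x.2 = y.2.
Proof.
have Ho t : oriented (braidlike w) t by rewrite /oriented ffunE.
by move=> /orP[] /edge_inv /orP[/eqP->//|/existsP[t /andP[/andP[Ht _] _]]];
  rewrite Ho in Ht.
Qed.


Lemma conn_mono (T : finType) (e e' : rel T) (A : pred T) x :
  (forall z z', A z -> e z z' -> e' z z') ->
  (forall z z', A z -> e z z' -> A z') -> A x ->
  forall y, connect e x y -> connect e' x y && A y.
Proof.
move=> He HA Ax y /connectP[p Hp ->]; elim: p x Ax Hp => [|z p IH] x Ax /=.
  by rewrite connect0 Ax.
move=> /andP[exz Hp]; have Az := HA _ _ Ax exz.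
case/andP: (IH z Az Hp) => H1 ->; rewrite andbT.
exact: connect_trans (connect1 (He _ _ Ax exz)) H1.
Qed.

Lemma sedge_sym (s : res w) : symmetric (sedge s).
Proof. by move=> x y; rewrite /sedge orbC. Qed.

Lemma vpath (s : res w) q a b : a <= b <= size w ->
  (forall t : 'I_(size w), a <= t < b -> oriented s t) ->
  connect (sedge s) (inord a, q) (inord b, q).
Proof.
elim: b => [|b IH] /andP[Hab Hb] Ho.
  by have -> : a = 0 by lia.
case: (ltnP b a) => Hba; first by have -> : a = b.+1 by lia.
apply: connect_trans (IH _ _) _; first by rewrite Hba /=; lia.
  by move=> t /andP[H1 H2]; apply: Ho; rewrite H1 /=; lia.
apply: connect1; apply/orP; left; apply/orP; right; apply/existsP.
have Hbw : b < size w by lia.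
exists (Ordinal Hbw); apply/orP; left => /=.
rewrite !inordK ?eqxx //=; last by lia.
by rewrite Ho ?orbT //= leqnn andbT.
Qed.

Lemma close_edge (s : res w) q : sedge s (inord (size w), q) (inord 0, q).
Proof. by apply/orP; left; apply/orP; left; rewrite /= !inordK ?eqxx. Qed.

Lemma to0 (s : res w) (u : nat) :
  (forall t : 'I_(size w), (t : nat) != u -> oriented s t) ->
  forall x : vert w, connect (sedge s) x (ord0, x.2).
Proof.
move=> Ho [l q] /=.
have -> : (ord0 : 'I_(size w).+1) = inord 0 by apply: val_inj; rewrite /= inordK.
rewrite -[l]inord_val.
case: (leqP l u) => Hlu.
  rewrite (sym_connect_sym (@sedge_sym s)).
  apply: vpath; first by rewrite /=; have := ltn_ord l; lia.
  by move=> t /andP[_ Ht]; apply: Ho; apply/eqP; lia.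
apply: connect_trans (vpath _ _ _) (connect1 (close_edge _ _)).
  by rewrite leqnn andbT; have := ltn_ord l; lia.
by move=> t /andP[Ht _]; apply: Ho; apply/eqP; lia.
Qed.

Lemma hedge (s : res w) (t : 'I_(size w)) : ~~ oriented s t ->
  sedge s (inord t, posA (letter t).1) (inord t, posB (letter t).1) &&
  sedge s (inord t.+1, posA (letter t).1) (inord t.+1, posB (letter t).1).
Proof.
move=> Ht; apply/andP; split; apply/orP; left; apply/orP; right; apply/existsP;
 exists t; apply/orP; right => /=; rewrite Ht !eqxx /= ?andbT ?orbT;
 rewrite inordK ?eqxx ?orbT //; have := ltn_ord t; lia.
Qed.


Definition flipB (u : 'I_(size w)) : res w :=
  [ffun v => if v == u then false else braidlike w v].

Lemma orient_B t : oriented (braidlike w) t.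
Proof. by rewrite /oriented ffunE. Qed.
Lemma orient_flip u t : t != u -> oriented (flipB u) t.
Proof. by move=> H; rewrite /oriented !ffunE (negbTE H). Qed.
Lemma norient_flip u : (letter u).2 = false -> ~~ oriented (flipB u) u.
Proof. by move=> H; rewrite /oriented !ffunE eqxx H. Qed.

Lemma connS (s : res w) x y : connect (sedge s) x y = connect (sedge s) y x.
Proof. exact: (sym_connect_sym (@sedge_sym s)). Qed.

Lemma circB x y : (y \in circle (braidlike w) x) = (y.2 == x.2).
Proof.
rewrite inE; apply/idP/idP.
  move=> H; have /andP[_ /eqP->] := conn_mono (e' := sedge (braidlike w))
     (A := [pred z | z.2 == x.2]) (fun _ _ _ h => h)
     (fun z z' (Hz : z.2 == x.2) h => introT eqP (etrans (esym (sedge_B h)) (eqP Hz))) (eqxx _) H.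
  by [].
move=> /eqP Hy.
have Ho : forall t : 'I_(size w), (t : nat) != size w -> oriented (braidlike w) t.
  by move=> t _; apply: orient_B.
apply: connect_trans (to0 Ho x) _; rewrite connS -Hy; exact: to0 Ho y.
Qed.

Lemma circF u (Hu : (letter u).2 = false) x y :
  (y \in circle (flipB u) x) = (fc (letter u).1 y.2 == fc (letter u).1 x.2).
Proof.
set c := (letter u).1.
have Ho : forall t : 'I_(size w), (t : nat) != u -> oriented (flipB u) t.
  by move=> t Ht; apply: orient_flip.
have Ho' : forall t, t != u -> oriented (flipB u) t by move=> t /orient_flip.
rewrite inE; apply/idP/idP.
  move=> H; have /andP[_ /eqP->] := conn_mono (e' := sedge (flipB u))
     (A := [pred z : vert w | fc c z.2 == fc c x.2]) (fun _ _ _ h => h)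
     (fun z z' (Hz : fc c z.2 == fc c x.2) h =>
        introT eqP (etrans (esym (sedge_f Ho' h)) (eqP Hz))) (eqxx _) H.
  by [].
have key : forall a : 'I_n, ((a : nat) == c) || ((a : nat) == c.+1) ->
   connect (sedge (flipB u)) (ord0, a) (ord0, posA c).
  move=> a /orP[/eqP Ha|/eqP Ha].
    by have -> : a = posA c by apply: val_inj. 
  have -> : a = posB c by apply: val_inj.
  case/andP: (hedge (norient_flip Hu)) => H1 _.
  have e1 := to0 Ho (inord u, posA c); have e2 := to0 Ho (inord u, posB c).
  rewrite connS in e2; rewrite /= in e1 e2.
  apply: connect_trans e2 _; apply: connect_trans _ e1.
  by rewrite connS; apply: connect1.
rewrite fc_eq => /orP[/eqP Hyx|/andP[Hy Hx]].
  have Hyx' : y.2 = x.2 by apply: val_inj.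
  apply: connect_trans (to0 Ho x) _; rewrite connS -Hyx'; exact: to0 Ho y.
apply: connect_trans (to0 Ho x) _; apply: connect_trans (key _ Hx) _.
rewrite connS; apply: connect_trans (to0 Ho y) _; exact: key _ Hy.
Qed.


Definition Qp (p : 'I_(size w)) : pred (vert w) := fun z =>
  (((z.1 : nat) == p) || ((z.1 : nat) == p.+1)) &&
  (((z.2 : nat) == (letter p).1) || ((z.2 : nat) == (letter p).1.+1)).

Lemma edge_agree (s s' : res w) p x y : (forall v, v != p -> s v = s' v) ->
  ~~ Qp p x -> edge s x y = edge s' x y /\ edge s y x = edge s' y x.
Proof.
move=> Hs HQ; rewrite /edge; split; congr (_ || _); apply: eq_existsb => t /=;
(case: (eqVneq t p) => [->{t}|Htp]; last by rewrite /oriented Hs).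
all: move: HQ; rewrite /Qp; set c := ((letter p).1 : nat).
all: case: (oriented s p); case: (oriented s' p) => //=.
all: rewrite -?[x.2 == y.2]/((x.2:nat) == y.2) -?[y.2 == x.2]/((y.2:nat) == x.2).
all: rewrite -?[x.1 == y.1]/((x.1:nat) == y.1) -?[y.1 == x.1]/((y.1:nat) == x.1).
all: move: (x.1 : nat) (y.1 : nat) (x.2 : nat) (y.2 : nat) (p : nat) c => a b d e q k.
all: rewrite !orbF !orbT !andbT.
all: repeat (case: eqP => //= ?); lia.
Qed.


Lemma sedge_agree (s s' : res w) p x y : (forall v, v != p -> s v = s' v) ->
  ~~ Qp p x -> sedge s x y = sedge s' x y.
Proof.
by move=> Hs HQ; case: (edge_agree y Hs HQ) => E1 E2; rewrite /sedge E1 E2.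
Qed.

Lemma circle_local (s s' : res w) p x : (forall v, v != p -> s v = s' v) ->
  (forall z, z \in circle s' x -> ~~ Qp p z) -> circle s' x = circle s x.
Proof.
move=> Hs HQ; apply/setP => y; rewrite !inE; apply/idP/idP => H.
  suff /andP[] : connect (sedge s) x y && (y \in circle s' x) by [].
  apply: (conn_mono (e := sedge s') (e' := sedge s)
    (A := fun z => z \in circle s' x)) H.
  - by move=> z z' Az; rewrite (sedge_agree _ Hs (HQ _ Az)).
  - by move=> z z'; rewrite !inE => Az Hz; apply: connect_trans Az (connect1 Hz).
  - by rewrite inE connect0.
suff /andP[_] : connect (sedge s') x y && (y \in circle s' x) by rewrite inE.
apply: (conn_mono (e := sedge s) (e' := sedge s')
    (A := fun z => z \in circle s' x)) H.
- by move=> z z' Az; rewrite (sedge_agree _ Hs (HQ _ Az)).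
- move=> z z' Az Hz; rewrite (sedge_agree _ Hs (HQ _ Az)) in Hz.
  by move: Az; rewrite !inE => Az; apply: connect_trans Az (connect1 Hz).
- by rewrite inE connect0.
Qed.

Lemma mem_circle (s : res w) x : x \in circle s x.
Proof. by rewrite inE connect0. Qed.

Lemma circle_eq (s : res w) x y : y \in circle s x -> circle s y = circle s x.
Proof.
rewrite inE => Hxy; apply/setP => z; rewrite !inE; apply/idP/idP => H.
  exact: connect_trans Hxy H.
by rewrite connS in Hxy; apply: connect_trans Hxy H.
Qed.

Lemma in_circles (s : res w) (C : {set vert w}) x : C \in circles s -> x \in C -> C = circle s x.
Proof. by case/imsetP => y _ -> Hx; rewrite (circle_eq Hx). Qed.

Lemma notin_circles (s : res w) (C : {set vert w}) a b : a \in C -> b \in C ->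
  ~~ connect (sedge s) a b -> C \notin circles s.
Proof.
move=> Ha Hb Hn; apply/negP => HC; move: Hb; rewrite (in_circles HC Ha) inE.
by apply/negP.
Qed.

Lemma notin_circles2 (s : res w) (C : {set vert w}) a b : a \in C -> b \notin C ->
  connect (sedge s) a b -> C \notin circles s.
Proof.
move=> Ha Hb Hc; apply/negP => HC; move: Hb; rewrite (in_circles HC Ha) inE.
by rewrite Hc.
Qed.


Section Sgn.
Import Order.TTheory GRing.Theory Num.Theory.
Local Open Scope ring_scope.

Lemma sgn_ge (L : {ffun vert w -> bool}) C : -1 <= sgn L C.
Proof. by rewrite /sgn; case: lab. Qed.

Lemma sum_sgn_ge (L : {ffun vert w -> bool}) (S : {set {set vert w}}) :
  - (#|S|%:Z) <= \sum_(C in S) sgn L C.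
Proof.
have : \sum_(C in S) (-1 : int) <= \sum_(C in S) sgn L C.
  by apply: ler_sum => C _; apply: sgn_ge.
by rewrite sumr_const; have -> : (-1 : int) *+ #|S| = - (#|S|%:Z) by lia.
Qed.

Lemma lab_false C : lab [ffun _ : vert w => false] C = false.
Proof. by apply/existsP => -[x /andP[_]]; rewrite ffunE. Qed.

Lemma sum_sgn_false (S : {set {set vert w}}) :
  \sum_(C in S) sgn [ffun _ : vert w => false] C = - (#|S|%:Z).
Proof.
rewrite (eq_bigr (fun _ => -1)); last by move=> C _; rewrite /sgn lab_false.
by rewrite sumr_const; have -> : (-1 : int) *+ #|S| = - (#|S|%:Z) by lia.
Qed.

Lemma sum_sgn_eq (L : {ffun vert w -> bool}) (S : {set {set vert w}}) :
  \sum_(C in S) sgn L C = - (#|S|%:Z) -> forall C, C \in S -> lab L C = false.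
Proof.
move=> H.
have H0 : \sum_(C in S) (sgn L C + 1) = 0.
  by rewrite big_split /= H sumr_const natz addNr.
move=> C CS.
have Hge : forall C', C' \in S -> 0 <= sgn L C' + 1.
  by move=> C' _; rewrite /sgn; case: lab.
have := psumr_eq0P Hge H0 CS.
by rewrite /sgn; case: lab.
Qed.
End Sgn.

End Basic.

Section Main.
Import Order.TTheory GRing.Theory Num.Theory.
Variables (n : nat) (w : seq ('I_n.-1 * bool)) (j : 'I_n.-1) (t : 'I_(size w)).
Hypothesis Ht : letter t = (j, false).
Hypothesis Hpos : forall u : 'I_(size w), letter u != (j, true).

Lemma validF (s : res w) : valid (s, [ffun _ : vert w => false]).
Proof. by apply/forallP => x; apply/forallP => y; rewrite !ffunE eqxx implybT. Qed.

Definition mkG (s : res w) : Gen w := exist _ (s, [ffun _ : vert w => false]) (validF s).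

Notation B := (braidlike w).
Notation Bt := (flipB t).

Lemma Ht2 : (letter t).2 = false. Proof. by rewrite Ht. Qed.
Lemma Ht1 : (letter t).1 = j. Proof. by rewrite Ht. Qed.

Lemma circBt x y : (y \in circle Bt x) = (fc j y.2 == fc j x.2).
Proof. by rewrite circF ?Ht2 // Ht1. Qed.

Lemma X1 (x : vert w) : ~~ (((x.2 : nat) == j) || ((x.2 : nat) == j.+1)) -> circle Bt x = circle B x.
Proof.
move=> Hx; apply/setP => y; rewrite circBt circB fc_eq (negbTE Hx) andbF orbF.
by rewrite val_eqE.
Qed.

Lemma posAB (c : 'I_n.-1) : posA c != posB c.
Proof. by rewrite -val_eqE /= eqn_leq ltnn andbF. Qed.

Lemma X4 : circles B :\: circles Bt =
  [set circle B (ord0, posA j); circle B (ord0, posB j)].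
Proof.
apply/setP => C; rewrite !inE; apply/idP/idP.
  case/andP => HC /imsetP[x _ EC]; rewrite EC in HC *.
  case: (boolP (((x.2 : nat) == j) || ((x.2 : nat) == j.+1))) => Hx; last first.
    by move: HC; rewrite -X1 // imset_f.
  have Hx' : (x.2 == posA j) || (x.2 == posB j) by rewrite -!val_eqE.
  case/orP: Hx' => /eqP Ex; apply/orP; [left|right]; apply/eqP/setP => y;
    by rewrite !circB Ex.
case/orP => /eqP->; rewrite imset_f // andbT.
  apply: (@notin_circles2 _ _ _ _ (ord0, posA j) (ord0, posB j)).
  - exact: mem_circle.
  - by rewrite circB /= eq_sym posAB.
  - have H : (ord0, posB j) \in circle Bt (ord0, posA j).
      by rewrite circBt /= fc_eq !eqxx /= !orbT.
    by rewrite inE in H.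
apply: (@notin_circles2 _ _ _ _ (ord0, posB j) (ord0, posA j)).
- exact: mem_circle.
- by rewrite circB /= posAB.
- have H : (ord0, posA j) \in circle Bt (ord0, posB j).
    by rewrite circBt /= fc_eq !eqxx /= !orbT.
  by rewrite inE in H.
Qed.


Lemma X5 : circles Bt :\: circles B = [set circle Bt (ord0, posA j)].
Proof.
apply/setP => C; rewrite !inE; apply/idP/idP.
  case/andP => HC /imsetP[x _ EC]; rewrite EC in HC *.
  case: (boolP (((x.2 : nat) == j) || ((x.2 : nat) == j.+1))) => Hx; last first.
    by move: HC; rewrite X1 // imset_f.
  apply/eqP/setP => y; rewrite !circBt /=.
  have -> : fc j x.2 = fc j j by case/orP: Hx => /eqP->; rewrite /fc ?eqxx; case: ifP.
  by [].
move/eqP->; rewrite imset_f // andbT.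
apply: (@notin_circles _ _ _ _ (ord0, posA j) (ord0, posB j)).
- exact: mem_circle.
- by rewrite circBt /= fc_eq !eqxx !orbT.
- have : (ord0, posB j) \notin circle B (ord0, posA j) by rewrite circB /= eq_sym posAB.
  by rewrite inE.
Qed.

Lemma cardX4 : #|circles B :\: circles Bt| = 2.
Proof.
rewrite X4 cards2; case: eqP => // E.
have := mem_circle B (ord0, posB j); rewrite -E circB /= eq_sym.
by rewrite (negbTE (posAB j)).
Qed.

Lemma cardX5 : #|circles Bt :\: circles B| = 1.
Proof. by rewrite X5 cards1. Qed.


Lemma Bt_t : Bt t = false. Proof. by rewrite ffunE eqxx. Qed.
Lemma B_t : B t = true. Proof. by rewrite ffunE Ht2. Qed.

Lemma coef_psi : coef (mkG Bt) (mkG B).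
Proof.
rewrite /coef /=; apply/and3P; split.
- apply/existsP; exists t; rewrite Bt_t /=; apply/forallP => v.
  rewrite !ffunE; case: (v =P t) => [->|_] //=; by rewrite Ht2.
- by apply/forallP => C; apply/implyP.
- rewrite !sum_sgn_false cardX5.
  have -> : #|circles B :\: circles Bt| = 2 by exact: cardX4.
  by [].
Qed.


Lemma coef_inv (g' : Gen w) : coef (mkG Bt) g' -> val g' = (B, [ffun _ => false]).
Proof.
case: g' => [[s' L'] vg] /=.
rewrite /coef /= => /and3P[/existsP[u /andP[Hu /forallP Hs']] /forallP Hlab /eqP Hsum].
have Es' : s' = [ffun v => (v == u) || Bt v].
  by apply/ffunP => v; rewrite ffunE; apply/eqP.
case: (eqVneq u t) => [Eut|Hut].
  subst u.
  have EB : s' = B.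
    by rewrite Es'; apply/ffunP => v; rewrite !ffunE; case: (v =P t) => [->|_]; rewrite ?Ht2.
  rewrite EB in Hsum Hlab *; congr pair; apply/ffunP => x; rewrite ffunE.
  have HS : forall C, C \in circles B :\: circles Bt -> lab L' C = false.
    apply: sum_sgn_eq; rewrite Hsum sum_sgn_false cardX5 cardX4; by [].
  set C := circle B x.
  have Hx : lab L' C = false.
    case: (boolP (C \in circles Bt)) => HC.
      have := Hlab C; rewrite inE HC imset_f //= => /eqP <-; exact: lab_false.
    by apply: HS; rewrite inE HC imset_f.
  apply/negbTE/negP => Lx.
  have : lab L' C by apply/existsP; exists x; rewrite mem_circle Lx.
  by rewrite Hx.
exfalso.
have Hl2 : (letter u).2 = true.
  by move: Hu; rewrite !ffunE (negbTE Hut); case: (letter u).2.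
set c := (letter u).1.
have Hc : (c : nat) <> j.
  move=> E; have := Hpos u; rewrite [letter u]surjective_pairing Hl2.
  by rewrite (_ : (letter u).1 = j) ?eqxx //; apply: val_inj.
have Hag : forall v, v != u -> Bt v = s' v.
  by move=> v Hv; rewrite Es' !ffunE (negbTE Hv).
have Hor : ~~ oriented s' u by rewrite /oriented Es' ffunE eqxx Hl2.
case/andP: (hedge Hor) => H1 H2.
set a := (inord u, posA c) : vert w.
set b := (inord u, posB c) : vert w.
have Hab : b \notin circle Bt a.
  rewrite circBt /= fc_eq; apply/negP.
  case/orP => [/eqP|/andP[/orP[]/eqP ? /orP[]/eqP ?]]; lia.
have Hba : a \notin circle Bt b.
  rewrite circBt /= fc_eq; apply/negP.
  case/orP => [/eqP|/andP[/orP[]/eqP ? /orP[]/eqP ?]]; lia.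
have HA1 : circle Bt a \in circles Bt :\: circles s'.
  rewrite inE imset_f // andbT.
  apply: (@notin_circles2 _ _ _ _ a b) => //; first exact: mem_circle.
  exact: connect1 H1.
have HA2 : circle Bt b \in circles Bt :\: circles s'.
  rewrite inE imset_f // andbT.
  apply: (@notin_circles2 _ _ _ _ b a) => //; first exact: mem_circle.
  by rewrite connS; exact: connect1 H1.
have HA12 : circle Bt a != circle Bt b.
  by apply/eqP => E; move: Hab; rewrite E mem_circle.
have Hold : 2 <= #|circles Bt :\: circles s'|.
  have : #|[set circle Bt a; circle Bt b]| <= #|circles Bt :\: circles s'|.
    apply: subset_leq_card; apply/subsetP => C; rewrite !inE.
    by case/orP => /eqP->; rewrite -!in_setD.
  by rewrite cards2 HA12.
set a1 := (inord u.+1, posA c) : vert w.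
have Hnew : #|circles s' :\: circles Bt| <= 2.
  have : #|circles s' :\: circles Bt| <= #|[set circle s' a; circle s' a1]|.
    apply: subset_leq_card; apply/subsetP => C; rewrite inE.
    case/andP => HC /imsetP[x _ EC].
    case: (boolP [exists z in C, Qp u z]) => [/existsP[z /andP[zC Qz]]|Hn]; last first.
      move: HC; rewrite EC (circle_local (x:=x) Hag) ?imset_f //.
      move=> z Hz; apply/negP => Qz; move/negP: Hn; apply; apply/existsP.
      by exists z; rewrite EC Hz Qz.
    have EC' : C = circle s' z by rewrite EC (circle_eq (s:=s') (x:=x)) // -EC.
    rewrite EC' !inE; move: Qz; rewrite /Qp; case: z {zC EC'} => l q /= /andP[Hl Hq].
    have [Eq|Eq] : q = posA c \/ q = posB c by
      case/orP: Hq => /eqP E; [left|right]; apply: val_inj; rewrite /= E.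
    1-2: (have [El|El] : l = inord u \/ l = inord u.+1 by
      case/orP: Hl => /eqP E; [left|right]; apply: val_inj; rewrite /= inordK // -E ltn_ord);
      rewrite El Eq.
    - by rewrite eqxx.
    - by rewrite eqxx orbT.
    - by rewrite (circle_eq (x:=a)) ?eqxx // inE; exact: connect1 H1.
    - by rewrite (circle_eq (x:=a1)) ?eqxx ?orbT // inE; exact: connect1 H2.
  by rewrite cards2 => /leq_trans; apply; case: (_ != _).
have := sum_sgn_ge L' (circles s' :\: circles Bt).
rewrite Hsum sum_sgn_false; lia.
Qed.


Local Open Scope ring_scope.

Lemma kgr_ge (g : Gen w) :
  - (#|[set C in circles (val g).1 | nontrivial C]|%:Z) <= kgr g.
Proof.
rewrite /kgr (eq_bigl (fun C => C \in [set C in circles (val g).1 | nontrivial C])).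
  exact: sum_sgn_ge.
by move=> C; rewrite inE.
Qed.

Lemma kgr_mkG s : kgr (mkG s) = - (#|[set C in circles s | nontrivial C]|%:Z).
Proof.
rewrite /kgr (eq_bigl (fun C => C \in [set C in circles s | nontrivial C])).
  exact: sum_sgn_false.
by move=> C; rewrite inE.
Qed.

Lemma cardD (c : 'I_n.-1) :
  (#|[set q : 'I_n | ((q : nat) != c) && ((q : nat) != c.+1)]| + 2)%N = n.
Proof.
have -> : [set q : 'I_n | ((q : nat) != c) && ((q : nat) != c.+1)] =
          ~: [set posA c; posB c].
  by apply/setP => q; rewrite !inE -!val_eqE /= negb_or.
have := cardsC [set posA c; posB c]; rewrite cards2 posAB card_ord; lia.
Qed.


Lemma kgr_gt : kgr (mkG Bt) <= 2%:Z - n%:Z.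
Proof.
rewrite kgr_mkG.
have HD := cardD j.
set D := [set q : 'I_n | ((q : nat) != j) && ((q : nat) != j.+1)] in HD *.
set f := fun q : 'I_n => circle Bt (ord0, q).
have Hinj : {in D &, injective f}.
  move=> q1 q2; rewrite !inE => Hq1 Hq2 E.
  have := mem_circle Bt (ord0, q1); rewrite -/(f q1) E /f circBt /= fc_eq.
  rewrite -negb_or in Hq1; rewrite (negbTE Hq1) /= orbF.
  by move/eqP => E'; apply: val_inj.
have : (#|D| <= #|[set C in circles Bt | nontrivial C]|)%N.
  rewrite -(card_in_imset Hinj); apply: subset_leq_card; apply/subsetP => C.
  case/imsetP => q Hq ->; rewrite inE /f imset_f //= /nontrivial.
  have -> : [set p : 'I_n | (ord0, p) \in circle Bt (ord0, q)] = [set q] => //.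
    apply/setP => p; rewrite in_set1 in_set circBt /= fc_eq.
    move: Hq; rewrite inE -negb_or => /negbTE->; rewrite andbF orbF.
    by rewrite val_eqE.
  by rewrite cards1.
lia.
Qed.


Lemma kgr_lb (g : Gen w) : coef g (mkG B) -> 2%:Z - n%:Z <= kgr g.
Proof.
move=> Hco; apply: le_trans (kgr_ge g); move: Hco.
case: g => [[s L] vg] /=.
rewrite /coef /= => /and3P[/existsP[u /andP[Hu /forallP Hs]] _ _].
have Es : s = flipB u.
  apply/ffunP => v; have := Hs v; rewrite !ffunE; case: (v =P u) => [->|_] /=.
    by move=> _; apply/negbTE.
  by move/eqP->.
have Hu2 : (letter u).2 = false.
  by have := Hs u; rewrite eqxx ffunE /=; case: (letter u).2.
set c := (letter u).1.
have HD := cardD c.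
set D := [set q : 'I_n | ((q : nat) != c) && ((q : nat) != c.+1)] in HD *.
set f := fun q : 'I_n => circle s (ord0, q).
have : (#|[set C in circles s | nontrivial C]| <= #|D|)%N.
  apply: leq_trans (leq_imset_card f D); apply: subset_leq_card.
  apply/subsetP => C; rewrite inE => /andP[/imsetP[x _ ->] Hnt].
  case: (boolP (((x.2 : nat) == c) || ((x.2 : nat) == c.+1))) => Hx.
    move: Hnt; rewrite /nontrivial.
    have -> : [set p : 'I_n | (ord0, p) \in circle s x] = [set posA c; posB c].
      apply/setP => p; rewrite in_set2 in_set Es circF // /= fc_eq Hx andbT.
      rewrite -!val_eqE /=; case/orP: Hx => /eqP->; case: eqP => //= ->; by rewrite ?eqxx ?orbT.
    by rewrite cards2 posAB.
  have -> : circle s x = f x.2.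
    rewrite /f (circle_eq (x:=x)) // Es circF //.
  by rewrite imset_f // inE -negb_or.
move: #|[set C in circles s | nontrivial C]| => k. move=> Hk; have H : (2%:Z - n%:Z <= - (k%:Z))%R by lia.
exact: H.
Qed.

End Main.


Import Order.TTheory GRing.Theory Num.Theory.
Local Open Scope ring_scope.

Theorem mainTheorem7 (n : nat) (w : seq ('I_n.-1 * bool)) (j : 'I_n.-1)
  (Hneg : (j, false) \in w) (Hpos : (j, true) \notin w) :
  kappa_is w (Some (2%:Z)%R).
Proof.
have Hi : (index (j, false) w < size w)%N by rewrite index_mem.
set t : 'I_(size w) := Ordinal Hi.
have Ht : letter t = (j, false) by rewrite /letter (tnth_nth (j, false)) /= nth_index.
have Hp : forall u : 'I_(size w), letter u != (j, true).
  move=> u; apply/eqP => E; move/negP: Hpos; apply; rewrite -E /letter.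
  exact: (mem_tnth u (in_tuple w)).
split.
  exists [ffun g => if g == mkG (flipB t) then 1 else 0]; split.
    apply/forallP => g; apply/implyP; rewrite ffunE.
    case: (g =P mkG (flipB t)) => [-> _|]; last by rewrite eqxx.
    exact: kgr_gt Ht.
  apply/ffunP => g'; rewrite !ffunE.
  rewrite (bigD1 (mkG (flipB t))) //= ffunE eqxx mul1r big1 ?addr0; last first.
    by move=> g /negbTE Hg; rewrite ffunE Hg mul0r.
  case E: (val g' == (braidlike w, [ffun _ => false])).
    have -> : g' = mkG (braidlike w) by apply: val_inj; apply/eqP.
    by rewrite (coef_psi Ht).
  case Hc: coef => //.
  by move: E; rewrite (coef_inv Ht Hp Hc) eqxx.
move=> i y Hf Hd.
have := congr1 (fun f : chain w => f (mkG (braidlike w))) Hd; rewrite /= !ffunE eqxx.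
case: (pickP (fun g => (y g != 0) && coef g (mkG (braidlike w)))) => [g /andP[Hy Hc] _|H].
  have := forallP Hf g; rewrite Hy /= => Hk.
  exact: le_trans (kgr_lb Hc) Hk.
rewrite big1 => [|g _]; first by move/esym/eqP; rewrite oner_eq0.
have Hg : ((y g != 0) && coef g (mkG (braidlike w))) = false := H g.
move: Hg => /negbT; rewrite negb_and negbK => /orP[/eqP->|/negbTE->].
  by rewrite mul0r.
by rewrite mulr0.
Qed.
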